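(* Let $F:\mathcal{P}(V,A)\to S_2(A)$ be a consular election rule satisfying SPO and SPP. Let $P$ be a profile, $i$ a voter, $W=F(P)$, $t=\mathrm{best}(P_i,W)$, $s=\mathrm{worst}(P_i,W)$, and let $W'=F(P^{i\uparrow s})$. Then (1) $\mathrm{best}(P_i^{\uparrow s},W')\in\{t,s\}$, and (2) $\mathrm{worst}(P_i^{\uparrow s},W')\in\{s,t\}$.
   Context: $V$ is a finite nonempty set of voters, $A$ a finite set of alternatives; a profile $P$ assigns to each voter $i$ a linear order $P_i$ on $A$ (strict part $\succ_i$, weak part $\succeq_i$); $P_i'P_{-i}$ replaces voter $i$'s order by $P_i'$. $S_2(A)$ is the set of 2-element subsets of $A$; a consular election rule is a map $F:\mathcal{P}(V,A)\to S_2(A)$. $\mathrm{best}(P_i,W)$, $\mathrm{worst}(P_i,W)$ are the $P_i$-best and $P_i$-worst elements of $W$. SPO: for all $P$, $i$, $P_i'$, $\mathrm{best}(P_i,F(P))\succeq_i\mathrm{best}(P_i,F(P_i'P_{-i}))$; SPP: same with $\mathrm{worst}$. $P_i^{\uparrow s}$ is the linear order obtained from $P_i$ by swapping $s$ with the alternative directly above it (no change if $s$ is already ranked first), and $P^{i\uparrow s}$ is the profile obtained from $P$ by replacing $P_i$ with $P_i^{\uparrow s}$. *)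

(* Defs.v *)
From mathcomp Require Import all_boot all_order all_fingroup.
Set Implicit Arguments. Unset Strict Implicit. Unset Printing Implicit Defensive.

Section Defs.
Variable A : finType.

(* A linear order on A is encoded by a permutation p : {perm A}; the
   alternative x sits at position  rank p x  (0 = top, i.e. best).  This is a
   bijection between {perm A} and the linear orders on A. *)
Definition rank (p : {perm A}) (x : A) : nat := enum_rank (p x).

Definition sprefers (p : {perm A}) x y := rank p x < rank p y.
Definition wprefers (p : {perm A}) x y := rank p x <= rank p y.

(* P_i^{up s}: swap s with the alternative directly above it (if any) *)
Definition up (p : {perm A}) (s : A) : {perm A} :=
  match [pick u | (rank p u).+1 == rank p s] with
  | Some u => (p * tperm (p s) (p u))%g
  | None => p
  end.

Definition best (p : {perm A}) (W : {set A}) : option A :=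
  [pick x in W | [forall y in W, wprefers p x y]].
Definition worst (p : {perm A}) (W : {set A}) : option A :=
  [pick x in W | [forall y in W, wprefers p y x]].
End Defs.

Section Profiles.
Variables (V A : finType).
Definition profile := {ffun V -> {perm A}}.

Definition upd (P : profile) (i : V) (q : {perm A}) : profile :=
  [ffun j => if j == i then q else P j].

Definition up_profile (P : profile) (i : V) (s : A) : profile :=
  upd P i (up (P i) s).

Definition consular (F : profile -> {set A}) := forall P : profile, #|F P| = 2.

Definition SPO (F : profile -> {set A}) :=
  forall (P : profile) (i : V) (q : {perm A}) (x y : A), best (P i) (F P) = Some x ->
    best (P i) (F (upd P i q)) = Some y -> wprefers (P i) x y.

Definition SPP (F : profile -> {set A}) :=
  forall (P : profile) (i : V) (q : {perm A}) (x y : A), worst (P i) (F P) = Some x ->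
    worst (P i) (F (upd P i q)) = Some y -> wprefers (P i) x y.
End Profiles.

(* Main.v *)
Require Import Defs.
From mathcomp Require Import all_boot all_order all_fingroup.
From mathcomp Require Import zify.
From mathcomp Require Import zify.
Set Implicit Arguments. Unset Strict Implicit.

Section H.
Variable A : finType.
Implicit Types (p : {perm A}) (W : {set A}).

Lemma rank_inj p x y : rank p x = rank p y -> x = y.
Proof. by rewrite /rank => /eqP; rewrite (inj_eq val_inj) => /eqP /enum_rank_inj /perm_inj. Qed.

Lemma bestP p W x : best p W = Some x <-> x \in W /\ forall y, y \in W -> rank p x <= rank p y.
Proof.
rewrite /best; split.
  case: pickP => [z /andP[zW /forall_inP H] [<-]|//]; split=> // y yW; exact: H.
move=> [xW H]; case: pickP => [z /andP[zW /forall_inP Hz]|/(_ x)].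
  congr Some; apply: rank_inj; apply/eqP; rewrite eqn_leq; apply/andP; split; [exact: Hz | exact: H].
by rewrite xW /=; move/negbT/negP; case; apply/forall_inP => y yW; apply: H.
Qed.

Lemma worstP p W x : worst p W = Some x <-> x \in W /\ forall y, y \in W -> rank p y <= rank p x.
Proof.
rewrite /worst; split.
  case: pickP => [z /andP[zW /forall_inP H] [<-]|//]; split=> // y yW; exact: H.
move=> [xW H]; case: pickP => [z /andP[zW /forall_inP Hz]|/(_ x)].
  congr Some; apply: rank_inj; apply/eqP; rewrite eqn_leq; apply/andP; split; [exact: H | exact: Hz].
by rewrite xW /=; move/negbT/negP; case; apply/forall_inP => y yW; apply: H.
Qed.

Lemma best_ex p W x0 : x0 \in W -> exists x, best p W = Some x.
Proof.
move=> x0W; case: (arg_minnP (rank p) x0W) => x xW H.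
by exists x; apply/bestP; split.
Qed.

Lemma worst_ex p W x0 : x0 \in W -> exists x, worst p W = Some x.
Proof.
move=> x0W; case: (arg_maxnP (rank p) x0W) => x xW H.
by exists x; apply/worstP; split.
Qed.

Lemma up_cases p s :
  (up p s = p) \/
  exists u, (rank p u).+1 = rank p s /\ rank (up p s) s = rank p u /\
     rank (up p s) u = rank p s /\
     forall x, x != s -> x != u -> rank (up p s) x = rank p x.
Proof.
rewrite /up; case: pickP => [u /eqP Hu|_]; last by left.
right; exists u; split=> //.
rewrite /rank !permM tpermL tpermR; split=> //; split=> // x xs xu.
by rewrite permM tpermD // (inj_eq perm_inj) eq_sym.
Qed.

Lemma two_set W t s : #|W| = 2 -> t \in W -> s \in W -> t != s -> W = [set t; s].
Proof.
move=> cW tW sW ts; apply/esym/eqP; rewrite eqEcard cards2 ts cW leqnn andbT.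
by apply/subsetP => z; rewrite !inE => /orP[] /eqP ->.
Qed.
End H.
Unset Implicit Arguments.
Ltac clean := repeat match goal with
  | H : ?T |- _ => lazymatch T with
      | is_true (_ <= _) => fail
      | is_true (_ < _) => fail
      | @eq nat _ _ => fail
      | _ => clear H
      end
  end.
Ltac slia := clean; lia.

Local Opaque rank up best worst.
Theorem lemma9 (V A : finType) (F : profile V A -> {set A})
  (hV : 0 < #|V|) (hF : consular F) (hSPO : SPO F) (hSPP : SPP F)
  (P : profile V A) (i : V) (t s : A) :
  best (P i) (F P) = Some t -> worst (P i) (F P) = Some s ->
  (best (up (P i) s) (F (up_profile P i s)) = Some t \/
   best (up (P i) s) (F (up_profile P i s)) = Some s) /\
  (worst (up (P i) s) (F (up_profile P i s)) = Some s \/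
   worst (up (P i) s) (F (up_profile P i s)) = Some t).
Proof.
move=> hb hw.
set p := P i; set p' := up p s; set P' := up_profile P i s.
set W := F P; set W' := F P'.
have hP'i : P' i = p' by rewrite /P' /up_profile /upd ffunE eqxx.
have hback : upd P' i p = P.
  by apply/ffunP => j; rewrite !ffunE; case: eqP => // ->; rewrite /p.
have [tW tmin] := proj1 (bestP _ _ _) hb.
have [sW smax] := proj1 (worstP _ _ _) hw.
have ts : t != s.
  apply/eqP => ets; have := hF P; rewrite -/W.
  have -> : W = [set t].
    apply/setP => z; rewrite inE; apply/idP/eqP => [zW|->//].
    apply: rank_inj (p) _ _ _; apply/eqP; rewrite eqn_leq tmin // andbT.
    by rewrite ets smax.
  by rewrite cards1.
have eW : W = [set t; s] by apply: two_set => //; apply: hF.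
have rts : rank p t < rank p s.
  rewrite ltn_neqAle tmin // andbT; apply/eqP => /rank_inj; exact/eqP.
have [z0 z0W'] : exists z, z \in W'.
  have : 0 < #|W'| by rewrite hF.
  by case/card_gt0P => z; exists z.
have [b hbb] := best_ex p z0W'.
have [w hww] := worst_ex p z0W'.
have [b' hbb'] := best_ex p' z0W'.
have [w' hww'] := worst_ex p' z0W'.
have [bW' bmin] := proj1 (bestP _ _ _) hbb.
have [wW' wmax] := proj1 (worstP _ _ _) hww.
have [bW'' bmin'] := proj1 (bestP _ _ _) hbb'.
have [wW'' wmax'] := proj1 (worstP _ _ _) hww'.
have Htb : rank p t <= rank p b by apply: (hSPO P i p' t b hb hbb).
have Hsw : rank p s <= rank p w by apply: (hSPP P i p' s w hw hww).
have SPO' : forall y, best p' W = Some y -> rank p' b' <= rank p' y.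
  move=> y hy; have := hSPO P' i p b' y; rewrite hP'i hback; exact.
have SPP' : forall y, worst p' W = Some y -> rank p' w' <= rank p' y.
  move=> y hy; have := hSPP P' i p w' y; rewrite hP'i hback; exact.
have fin2 : t \in W' -> s \in W' -> W' = W.
  by move=> tW' sW'; rewrite eW; apply: two_set => //; apply: hF.
have fin3 : (forall z, z \in W' -> z = t \/ z = s) -> W' = W.
  move=> H; apply/eqP; rewrite eqEcard eW cards2 ts hF leqnn andbT.
  by apply/subsetP => z /H; rewrite !inE => -[] ->; rewrite eqxx ?orbT.
have eW' : W' = W.
  case: (up_cases p s) => [ep | [u [hu [hs' [hu' hx']]]]].
    have ep' : p' = p by [].
    have e1 : b' = t.
      apply: rank_inj (p) _ _ _; apply/eqP; rewrite eqn_leq.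
      have := SPO' t; rewrite ep' hb => /(_ erefl) ->.
      by have := bmin _ bW''; slia.
    have e2 : w = s.
      apply: rank_inj (p) _ _ _; apply/eqP; rewrite eqn_leq Hsw andbT.
      have := SPP' s; rewrite ep' hw => /(_ erefl).
      by have := wmax' _ wW'; rewrite ep'; slia.
    by apply: fin2; [rewrite -e1 | rewrite -e2].
  have us : u != s by apply/eqP => eus; move: hu; rewrite eus; slia.
  have rt' : t != s -> t != u -> rank p' t = rank p t by move=> *; apply: hx'.
  case: (eqVneq u t) => [eut | nut].
    subst u.
    have hbW : best p' W = Some s.
      apply/bestP; split=> // y; rewrite eW !inE => /orP[] /eqP ->; rewrite /p' ?hs' ?hu'; slia.
    have hwW : worst p' W = Some t.
      apply/worstP; split=> // y; rewrite eW !inE => /orP[] /eqP ->; rewrite /p' ?hs' ?hu'; slia.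
    have H1 := SPP' _ hwW.
    apply: fin3 => z zW'.
    have h1 := wmax' _ zW'. have h2 := bmin _ zW'.
    case: (eqVneq z t) => [->|zt]; first by left.
    case: (eqVneq z s) => [->|zs]; first by right.
    have hz := hx' z zs zt.
    rewrite /p' in hz H1 h1; rewrite hu' in H1.
    have : rank p z = rank p t \/ rank p z = rank p s by slia.
    by case=> /rank_inj ->; [left|right].
  have rt : rank p' t = rank p t by apply: hx' => //; rewrite eq_sym.
  have hbW : best p' W = Some t.
    apply/bestP; split=> // y; rewrite eW !inE => /orP[] /eqP ->; rewrite /p' ?hs' ?rt; slia.
  have hwW : worst p' W = Some s.
    apply/worstP; split=> // y; rewrite eW !inE => /orP[] /eqP ->; rewrite /p' ?hs' ?rt; slia.
  have H1 := SPO' _ hbW. have H2 := SPP' _ hwW.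
  apply: fin2.
    have h2 := bmin _ bW''.
    case: (eqVneq b' t) => [<-//|bt].
    case: (eqVneq b' s) => [ebs|bs].
      exfalso; rewrite ebs /p' hs' rt in H1.
      have : rank p u = rank p t by slia.
      by move/rank_inj => eut; rewrite eut eqxx in nut.
    case: (eqVneq b' u) => [ebu|bu].
      by exfalso; rewrite ebu /p' hu' rt in H1; slia.
    have hz := hx' b' bs bu; rewrite /p' in hz H1; rewrite hz rt in H1.
    have : rank p b' = rank p t by slia.
    by move/rank_inj => <-.
  have h1 := wmax' _ wW'.
  case: (eqVneq w s) => [<-//|ws].
  case: (eqVneq w u) => [ewu|wu].
    by exfalso; rewrite ewu in Hsw; slia.
  have hz := hx' w ws wu; rewrite /p' in hz h1 H2; rewrite hz hs' in h1 H2.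
  by exfalso; slia.
rewrite eW'.
have tW0 : t \in W by []. have [x hx] := best_ex p' tW0; have [y hy] := worst_ex p' tW0.
have [xW _] := proj1 (bestP _ _ _) hx; have [yW _] := proj1 (worstP _ _ _) hy.
rewrite hx hy; move: xW yW; rewrite eW !inE => /orP[] /eqP -> /orP[] /eqP ->; tauto.
Qed.
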